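(* Let $K\in\mathbb{E}_{Büchi}$ and let $\dot-$ be a contraction function on $K$. Then $\dot-$ is rational and remains in $\mathbb{E}_{Büchi}$ if and only if $\dot-=\dot-_\gamma$ for some Büchi choice function $\gamma$.
   Context: Fix a finite nonempty $AP$. LTL formulae $\varphi::=\bot\mid p\mid\neg\varphi\mid\varphi\lor\varphi\mid X\varphi\mid\varphi U\varphi$ with standard semantics on traces in $(2^{AP})^\omega$; $\mathrm{Cn}_{LTL}(X)$ = formulae satisfied by every (finite) Kripke structure all of whose traces satisfy all of $X$; $\varphi\equiv\psi$ iff $\mathrm{Cn}_{LTL}(\{\varphi\})=\mathrm{Cn}_{LTL}(\{\psi\})$; $K+\varphi:=\mathrm{Cn}_{LTL}(K\cup\{\varphi\})$. Büchi automata over $2^{AP}$ (runs from initial states visiting recurrence states infinitely often), language $\mathcal{L}(A)$, $\mathrm{supp}(A):=\{\varphi\mid\pi\models\varphi\ \forall\pi\in\mathcal{L}(A)\}$; $\mathbb{E}_{Büchi}:=\{\mathrm{supp}(A)\mid A$ Büchi automaton$\}$. A contraction function on theory $K$ maps each formula $\varphi$ to $K\dot-\varphi$; rational means: (K1) $K\dot-\varphi=\mathrm{Cn}_{LTL}(K\dot-\varphi)$; (K2) $K\dot-\varphi\subseteq K$; (K3) $\varphi\notin K\Rightarrow K\dot-\varphi=K$; (K4) $\varphi\notin\mathrm{Cn}_{LTL}(\emptyset)\Rightarrow\varphi\notin K\dot-\varphi$; (K5) $K\subseteq(K\dot-\varphi)+\varphi$; (K6) $\varphi\equiv\psi\Rightarrow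 K\dot-\varphi=K\dot-\psi$. It remains in $\mathbb{E}_{Büchi}$ if all values lie in $\mathbb{E}_{Büchi}$. A Büchi choice function $\gamma$ maps each LTL formula to a Büchi automaton such that (BF1) $\mathcal{L}(\gamma(\varphi))\neq\emptyset$; (BF2) if $\varphi$ is not a tautology then $\neg\varphi\in\mathrm{supp}(\gamma(\varphi))$; (BF3) if $\varphi\equiv\psi$ then $\mathcal{L}(\gamma(\varphi))=\mathcal{L}(\gamma(\psi))$. The Büchi contraction function induced by $\gamma$ on $K$ is $K\dot-_\gamma\varphi:=K\cap\mathrm{supp}(\gamma(\varphi))$ if $\varphi\notin\mathrm{Cn}_{LTL}(\emptyset)$ and $\varphi\in K$, and $K\dot-_\gamma\varphi:=K$ otherwise. *)

(* Defs.v *)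
From mathcomp Require Import all_boot.
Unset Printing Implicit Defensive.

Section LTL.
Variable AP : finType.

Inductive ltl : Type :=
| LBot : ltl
| LAtom : AP -> ltl
| LNeg : ltl -> ltl
| LOr : ltl -> ltl -> ltl
| LNext : ltl -> ltl
| LUntil : ltl -> ltl -> ltl.

Definition trace := nat -> {set AP}.

Fixpoint sat (pi : trace) (i : nat) (phi : ltl) : Prop :=
  match phi with
  | LBot => False
  | LAtom p => p \in pi i
  | LNeg f => ~ sat pi i f
  | LOr f g => sat pi i f \/ sat pi i g
  | LNext f => sat pi i.+1 f
  | LUntil f g => exists k, i <= k /\ sat pi k g /\
                    (forall j, i <= j -> j < k -> sat pi j f)
  end.

Definition models (pi : trace) (phi : ltl) : Prop := sat pi 0 phi.

Definition theory := ltl -> Prop.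

Record kripke := Kripke {
  kstate : finType;
  kinit : pred kstate;
  ktrans : rel kstate;
  klabel : kstate -> {set AP};
  kinit_ne : exists s, kinit s;
  ktrans_total : forall s, exists t, ktrans s t
}.


Definition is_trace (M : kripke) (pi : trace) : Prop :=
  exists r : nat -> kstate M,
    kinit M (r 0) /\ (forall i, ktrans M (r i) (r i.+1)) /\
    (forall i, pi i = klabel M (r i)).

Definition Cn (X : theory) : theory := fun phi =>
  forall M : kripke,
    (forall pi, is_trace M pi -> forall psi, X psi -> models pi psi) ->
    (forall pi, is_trace M pi -> models pi phi).

Definition lequiv (phi psi : ltl) : Prop :=
  Cn (fun x => x = phi) = Cn (fun x => x = psi).

Definition expand (K : theory) (phi : ltl) : theory :=
  Cn (fun x => K x \/ x = phi).

Definition subth (A B : theory) : Prop := forall x, A x -> B x.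

Record buchi := Buchi {
  bstate : finType;
  binit : pred bstate;
  bdelta : bstate -> {set AP} -> bstate -> bool;
  bacc : pred bstate
}.


Definition accepting_run (A : buchi) (pi : trace) (r : nat -> bstate A) : Prop :=
  binit A (r 0) /\ (forall i, bdelta A (r i) (pi i) (r i.+1)) /\
  (forall n, exists m, n <= m /\ bacc A (r m)).

Definition lang (A : buchi) : trace -> Prop :=
  fun pi => exists r, accepting_run A pi r.

Definition supp (A : buchi) : theory :=
  fun phi => forall pi, lang A pi -> models pi phi.

Definition E_Buchi (T : theory) : Prop := exists A : buchi, T = supp A.

Definition contraction := ltl -> theory.

Definition rational (K : theory) (c : contraction) : Prop :=
  (forall phi, c phi = Cn (c phi)) /\                               (* K1 *)
  (forall phi, subth (c phi) K) /\                                  (* K2 *)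
  (forall phi, ~ K phi -> c phi = K) /\                             (* K3 *)
  (forall phi, ~ Cn (fun _ => False) phi -> ~ c phi phi) /\         (* K4 *)
  (forall phi, subth K (expand (c phi) phi)) /\                     (* K5 *)
  (forall phi psi, lequiv phi psi -> c phi = c psi).                (* K6 *)

Definition remains_in_EBuchi (c : contraction) : Prop :=
  forall phi, E_Buchi (c phi).

Definition tautology (phi : ltl) : Prop := forall pi : trace, models pi phi.

Definition buchi_choice (g : ltl -> buchi) : Prop :=
  (forall phi, exists pi, lang (g phi) pi) /\                       (* BF1 *)
  (forall phi, ~ tautology phi -> supp (g phi) (LNeg phi)) /\       (* BF2 *)
  (forall phi psi, lequiv phi psi -> lang (g phi) = lang (g psi)).  (* BF3 *)

Definition induced (K : theory) (g : ltl -> buchi) : contraction :=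
  fun phi chi =>
    K chi /\ ((~ Cn (fun _ => False) phi /\ K phi) -> supp (g phi) chi).

End LTL.

(* Main.v *)
Require Import Defs.
From HB Require Import structures.
From mathcomp Require Import all_boot zify.
From Stdlib Require Import Classical ClassicalEpsilon FunctionalExtensionality PropExtensionality.

Set Implicit Arguments.
Unset Strict Implicit.
Unset Printing Implicit Defensive.

Section Aux.
Variable AP : finType.
Local Arguments LBot {AP}.
Local Arguments LAtom {AP}.
Local Arguments LNeg {AP}.
Local Arguments LOr {AP}.
Local Arguments LNext {AP}.
Local Arguments LUntil {AP}.
Local Notation ltl := (ltl AP).
Local Notation sat := (sat AP).
Local Notation models := (models AP).
Local Notation trace := (trace AP).
Local Notation theory := (theory AP).
Local Notation buchi := (buchi AP).
Local Notation lang := (lang AP).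
Local Notation supp := (supp AP).
Local Notation bstate := (bstate AP).
Local Notation binit := (binit AP).
Local Notation bdelta := (bdelta AP).
Local Notation bacc := (bacc AP).
Local Notation Cn := (Cn AP).
Local Notation is_trace := (is_trace AP).
Local Notation lequiv := (lequiv AP).
Local Notation tautology := (tautology AP).
Local Notation kripke := (kripke AP).
Local Notation rational := (rational AP).
Local Notation remains_in_EBuchi := (remains_in_EBuchi AP).
Local Notation buchi_choice := (buchi_choice AP).
Local Notation induced := (induced AP).
Local Notation E_Buchi := (E_Buchi AP).
Local Notation expand := (expand AP).
Local Notation subth := (subth AP).
Local Notation contraction := (contraction AP).

Fixpoint ltl_eqb (f g : ltl) : bool :=
  match f, g with
  | LBot, LBot => true
  | LAtom p, LAtom q => p == q
  | LNeg f1, LNeg g1 => ltl_eqb f1 g1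
  | LOr f1 f2, LOr g1 g2 => ltl_eqb f1 g1 && ltl_eqb f2 g2
  | LNext f1, LNext g1 => ltl_eqb f1 g1
  | LUntil f1 f2, LUntil g1 g2 => ltl_eqb f1 g1 && ltl_eqb f2 g2
  | _, _ => false
  end.

Lemma ltl_eqP : Equality.axiom ltl_eqb.
Proof.
elim=> [|p|f IH|f IHf g IHg|f IH|f IHf g IHg] [|q|f'|f' g'|f'|f' g'] /=;
  try (by constructor);
  try (by apply: (iffP eqP) => [->|[]]);
  try (by apply: (iffP (IH f')) => [->|[]]).
- apply: (iffP andP) => [[/IHf -> /IHg ->]//|[<- <-]].
  by split; [apply/(IHf f)|apply/(IHg g)].
- apply: (iffP andP) => [[/IHf -> /IHg ->]//|[<- <-]].
  by split; [apply/(IHf f)|apply/(IHg g)].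
Qed.

HB.instance Definition _ := hasDecEq.Build ltl ltl_eqP.


Lemma thext (A B : theory) : (forall x, A x <-> B x) -> A = B.
Proof.
move=> H; apply: functional_extensionality => x.
by apply: propositional_extensionality; exact: H.
Qed.

Lemma until_exp pi j f g : sat pi j (LUntil f g) <->
  sat pi j g \/ (sat pi j f /\ sat pi j.+1 (LUntil f g)).
Proof.
split.
- move=> [k [hjk [hg hf]]].
  case: (ltngtP j k) hjk => // [hlt|->] _; last by left.
  right; split; first by apply: hf.
  exists k; split=> //; split=> // i hi hik; apply: hf=> //; exact: ltnW.
- case=> [hg|[hf [k [hjk [hg hf']]]]]; first by exists j; split=> //; split=> // i h1 h2; exfalso; move: (leq_ltn_trans h1 h2); rewrite ltnn.
  exists k; split; first exact: ltnW.
  split=> // i hi hik; case: (ltngtP j i) hi => // [hl|<-] _; [exact: hf'|exact: hf].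
Qed.

Record gba := GBA {
  gst : finType;
  gin : pred gst;
  gde : gst -> {set AP} -> gst -> bool;
  gI : finType;
  gacc : gI -> pred gst
}.
Arguments gin : clear implicits.
Arguments gde : clear implicits.
Arguments gacc : clear implicits.

Definition glang (G : gba) (pi : trace) : Prop :=
  exists r : nat -> gst G, gin G (r 0) /\ (forall i, gde G (r i) (pi i) (r i.+1)) /\
    (forall k n, exists m, n <= m /\ gacc G k (r m)).

Section Degen.
Variable G : gba.
Definition seen (q : gst G) : {set gI G} := [set k | gacc G k q].
Definition upd (S : {set gI G}) (q : gst G) :=
  if S == setT then seen q else S :|: seen q.

Definition degen : buchi :=
  @Buchi AP (gst G * {set gI G})%type
     (fun s => gin G s.1 && (s.2 == seen s.1))
     (fun s a s' => gde G s.1 a s'.1 && (s'.2 == upd s.2 s'.1))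
     (fun s => s.2 == setT).

Fixpoint Sseq (r : nat -> gst G) (i : nat) : {set gI G} :=
  if i is i'.+1 then upd (Sseq r i') (r i) else seen (r 0).

Lemma degen_lang pi : lang degen pi <-> glang G pi.
Proof.
split.
- move=> [rr [hi [hd ha]]].
  set r := fun i => (rr i).1.
  have hS : forall i, (rr i).2 = Sseq r i.
    elim=> [|i IH] /=; first by move/andP: hi => [_ /eqP].
    by move: (hd i) => /andP [_ /eqP ->]; rewrite IH.
  exists r; split; first by move/andP: hi => [].
  split; first by move=> i; move: (hd i) => /andP [].
  move=> k n.
  have [m1 [hm1 /eqP hf1]] := ha n.
  have [m2 [hm2 /eqP hf2]] := ha m1.+1.
  have key : forall d, k \in Sseq r (m1 + 1 + d) ->
      exists p, m1 < p <= m1 + 1 + d /\ gacc G k (r p).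
    elim=> [|d IH].
    + rewrite addn0 addn1 /= /upd -hS hf1 eqxx inE => hk.
      by exists m1.+1; rewrite !leqnn.
    + rewrite addnS /= /upd.
      case: ifP => _.
      * rewrite inE => hk; exists (m1 + 1 + d).+1; split; last by [].
        by rewrite leqnn andbT ltnS -addn1 -addnA leq_addr.
      * rewrite inE => /orP [/IH [p [/andP [h1 h2] hp]]|hk].
        ++ by exists p; rewrite h1 (leq_trans h2) ?leqnSn.
        ++ exists (m1 + 1 + d).+1; split; last by move: hk; rewrite inE.
          by rewrite leqnn andbT ltnS -addn1 -addnA leq_addr.
  have := key (m2 - m1.+1).
  rewrite addn1 subnKC // -hS hf2 inE => /(_ isT) [p [/andP [h1 _] hp]].
  by exists p; split=> //; apply: leq_trans (ltnW h1).
- move=> [r [hi [hd ha]]].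
  exists (fun i => (r i, Sseq r i)); split; first by rewrite /= hi eqxx.
  split; first by move=> i; rewrite /= hd eqxx.
  move=> n /=.
  have hM : forall s : seq (gI G), exists M, n <= M /\
      forall k, k \in s -> exists p, n < p <= M /\ gacc G k (r p).
    elim=> [|k s [M [hM hs]]]; first by exists n; split.
    have [p [hp hk]] := ha k n.+1.
    exists (maxn M p); split; first by rewrite (leq_trans hM) ?leq_maxl.
    move=> k'; rewrite inE => /orP [/eqP ->|/hs [p' [/andP [h1 h2] h3]]].
    + by exists p; rewrite hp leq_maxr.
    + by exists p'; rewrite h1 h3 (leq_trans h2) ?leq_maxl.
  have [M [hnM hall]] := hM (enum (gI G)).
  apply: NNPP => hno.
  have nofull : forall m, n <= m -> m <= M -> Sseq r m != setT.
    move=> m h1 h2; apply/negP => /eqP hm; apply: hno; exists m; split=> //.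
    by rewrite hm eqxx.
  have grow : forall d, n + d <= M -> forall p, n < p <= n + d ->
      seen (r p) \subset Sseq r (n + d).
    elim=> [|d IH] hdM p; first by rewrite addn0 => /andP [h1 h2]; move: (leq_trans h1 h2); rewrite ltnn.
    have hdM' : n + d < M by rewrite -addnS.
    rewrite addnS /= /upd (negbTE (nofull _ (leq_addr _ _) (ltnW hdM'))).
    move=> /andP [h1]; rewrite leq_eqVlt => /orP [/eqP ->|h2]; first exact: subsetUr.
    apply: subset_trans (subsetUl _ _); apply: IH; first exact: ltnW hdM'.
    by rewrite h1.
  have : Sseq r M == setT.
    apply/eqP/setP => k; rewrite inE.
    have [p [/andP [h1 h2] hp]] := hall k (mem_enum _ k).
    have := grow (M - n); rewrite subnKC // => /(_ (leqnn _) p).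
    by rewrite h1 h2 => /(_ isT) /subsetP; apply; rewrite inE.
  by rewrite (negbTE (nofull _ hnM (leqnn _))).
Qed.
End Degen.

Fixpoint subf (f : ltl) : seq ltl :=
  f :: match f with
       | LNeg g => subf g
       | LOr g h => subf g ++ subf h
       | LNext g => subf g
       | LUntil g h => subf g ++ subf h
       | _ => [::]
       end.

Lemma subf_self f : f \in subf f.
Proof. by case: f => * ; rewrite inE eqxx. Qed.

Lemma subf_trans f g : g \in subf f -> {subset subf g <= subf f}.
Proof.
elim: f => [|p|f IH|f IHf h IHh|f IH|f IHf h IHh] /=.
- by rewrite inE => /eqP ->.
- by rewrite inE => /eqP ->.
- rewrite inE => /orP [/eqP -> //|/IH hs x /hs hx]; by rewrite inE hx orbT.
- rewrite inE => /orP [/eqP -> //|]; rewrite mem_cat => /orP [/IHf|/IHh] hs x /hs hx;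
    by rewrite inE mem_cat hx ?orbT.
- rewrite inE => /orP [/eqP -> //|/IH hs x /hs hx]; by rewrite inE hx orbT.
- rewrite inE => /orP [/eqP -> //|]; rewrite mem_cat => /orP [/IHf|/IHh] hs x /hs hx;
    by rewrite inE mem_cat hx ?orbT.
Qed.

Definition pb (P : Prop) : bool :=
  if excluded_middle_informative P then true else false.
Lemma pbE P : pb P <-> P.
Proof. by rewrite /pb; case: excluded_middle_informative. Qed.
Lemma pb_iff P Q : (P <-> Q) -> pb P = pb Q.
Proof.
move=> h; apply/idP/idP => /pbE H; apply/pbE; tauto.
Qed.

Section Trans.
Variable B : buchi.
Variable phi : ltl.
Definition cl := subf phi.
Definition nn := size cl.
Definition Vt := {ffun 'I_nn.+1 -> bool}.
Definition vl (t : Vt) (f : ltl) : bool := t (inord (index f cl)).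

Lemma cl_sub f g : f \in cl -> g \in subf f -> g \in cl.
Proof. by move=> hf /(subf_trans hf). Qed.

Definition lc (t t' : Vt) (a : {set AP}) (f : ltl) : bool :=
  match f with
  | LBot => ~~ vl t f
  | LAtom p => vl t f == (p \in a)
  | LNeg g => vl t f == ~~ vl t g
  | LOr g h => vl t f == (vl t g || vl t h)
  | LNext g => vl t f == vl t' g
  | LUntil g h => vl t f == (vl t h || (vl t g && vl t' f))
  end.

Definition cons (t t' : Vt) (a : {set AP}) : bool := all (lc t t' a) cl.

Definition uacc (i : 'I_nn.+1) (t : Vt) : bool :=
  match nth LBot cl i with
  | LUntil g h => ~~ vl t (LUntil g h) || vl t h
  | _ => true
  end.

Definition trG : gba :=
  @GBA (bstate B * Vt)%type
    (fun s => binit B s.1 && vl s.2 phi)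
    (fun s a s' => bdelta B s.1 a s'.1 && cons s.2 s'.2 a)
    (option (ordinal nn.+1) : finType)
    (fun k s => match k with None => bacc B s.1 | Some i => uacc i s.2 end).

Definition truthT (pi : trace) (j : nat) : Vt :=
  [ffun i : 'I_nn.+1 => pb (sat pi j (nth LBot cl i))].

Lemma vl_truth pi j f : f \in cl -> vl (truthT pi j) f = pb (sat pi j f).
Proof.
move=> hf; rewrite /vl ffunE inordK ?nth_index //.
by rewrite ltnS ltnW // index_mem.
Qed.

Lemma pb_not P : pb (~ P) = ~~ pb P.
Proof. by apply/idP/idP => [/pbE hn|/negP hn]; [apply/negP => /pbE|apply/pbE => /pbE]. Qed.
Lemma pb_or P Q : pb (P \/ Q) = pb P || pb Q.
Proof.
apply/idP/idP => [/pbE [/pbE -> //|/pbE ->]|/orP [/pbE|/pbE]] ; rewrite ?orbT //; move=> h; apply/pbE; tauto.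
Qed.
Lemma pb_and P Q : pb (P /\ Q) = pb P && pb Q.
Proof.
apply/idP/idP => [/pbE [/pbE -> /pbE ->] //|/andP [/pbE h1 /pbE h2]]; apply/pbE; tauto.
Qed.
Lemma pb_bool (b : bool) : pb b = b.
Proof. by apply/idP/idP => [/pbE|h]; last apply/pbE. Qed.
Lemma pb_false : pb False = false.
Proof. by apply/negP => /pbE. Qed.

Lemma sub_neg g : LNeg g \in cl -> g \in cl.
Proof. by move/cl_sub; apply; rewrite /= inE subf_self orbT. Qed.
Lemma sub_next g : LNext g \in cl -> g \in cl.
Proof. by move/cl_sub; apply; rewrite /= inE subf_self orbT. Qed.
Lemma sub_orl g h : LOr g h \in cl -> g \in cl.
Proof. by move/cl_sub; apply; rewrite /= inE mem_cat subf_self orbT. Qed.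
Lemma sub_orr g h : LOr g h \in cl -> h \in cl.
Proof. by move/cl_sub; apply; rewrite /= inE mem_cat subf_self !orbT. Qed.
Lemma sub_untl g h : LUntil g h \in cl -> g \in cl.
Proof. by move/cl_sub; apply; rewrite /= inE mem_cat subf_self orbT. Qed.
Lemma sub_untr g h : LUntil g h \in cl -> h \in cl.
Proof. by move/cl_sub; apply; rewrite /= inE mem_cat subf_self !orbT. Qed.

Lemma nth_cl (i : 'I_nn.+1) g h : nth LBot cl i = LUntil g h -> LUntil g h \in cl.
Proof.
move=> e; case: (ltnP i nn) => hi; first by rewrite -e mem_nth.
by move: e; rewrite nth_default.
Qed.

Lemma trG_lang pi : glang trG pi <-> lang B pi /\ models pi phi.
Proof.
split.
- move=> [rho [hi [hd ha]]].
  set r := fun i => (rho i).1; set t := fun i => (rho i).2.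
  have hc : forall j, cons (t j) (t j.+1) (pi j) by move=> j; case/andP: (hd j).
  have hlc : forall j f, f \in cl -> lc (t j) (t j.+1) (pi j) f.
    by move=> j f hf; move/allP: (hc j); apply.
  have key : forall f, f \in cl -> forall j, vl (t j) f <-> sat pi j f.
    elim=> [|p|g IH|g IHg h IHh|g IH|g IHg h IHh] hf j.
    + by move: (hlc j _ hf) => /= /negbTE ->.
    + by move: (hlc j _ hf) => /= /eqP ->.
    + move: (hlc j _ hf) => /= /eqP ->; have := IH (sub_neg hf) j.
      by case: (vl (t j) g) => /=; intuition.
    + move: (hlc j _ hf) => /= /eqP ->.
      have := IHg (sub_orl hf) j; have := IHh (sub_orr hf) j.
      case: (vl (t j) g); case: (vl (t j) h) => /=; intuition.
    + by move: (hlc j _ hf) => /= /eqP ->; apply: IH (sub_next hf) _.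
    + have Hg := IHg (sub_untl hf); have Hh := IHh (sub_untr hf).
      set u := LUntil g h.
      have hexp : forall j, vl (t j) u = vl (t j) h || vl (t j) g && vl (t j.+1) u.
        by move=> j'; move: (hlc j' _ hf) => /= /eqP.
      split.
      * move=> hu.
        have hidx : nth LBot cl (inord (index u cl) : 'I_nn.+1) = u.
          by rewrite inordK ?nth_index // ltnS ltnW // index_mem.
        have [m [hjm hm]] := ha (Some (inord (index u cl))) j.
        move: hm; rewrite /= /uacc hidx => hm.
        have gen : forall d j, m = j + d -> vl (t j) u -> sat pi j u.
          elim=> [|d IHd] j' e hu'.
          - rewrite addn0 in e; subst j'.
            case/orP: hm => [hn|/Hh hh]; first by case: (negP hn hu').
            exists m; split=> //; split=> // i h1 h2.
            by move: (leq_ltn_trans h1 h2); rewrite ltnn.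
          - move: hu'; rewrite hexp => /orP [/Hh hh|/andP [/Hg hg hu1]].
            + exists j'; split=> //; split=> // i h1 h2.
              by move: (leq_ltn_trans h1 h2); rewrite ltnn.
            + have := IHd j'.+1; rewrite addSnnS => /(_ e hu1) hs.
              by apply/until_exp; right.
        by apply: (gen (m - j)); rewrite ?subnKC.
      * move=> [k [hjk [hk hfk]]].
        have gen : forall d j, k = j + d -> (forall i, j <= i -> i < k -> sat pi i g) ->
            vl (t j) u.
          elim=> [|d IHd] j' e hf'.
          - by rewrite addn0 in e; subst j'; rewrite hexp; apply/orP; left; apply/Hh.
          - rewrite hexp; apply/orP; right; apply/andP; split.
            + by apply/Hg; apply: hf' => //; rewrite e -addSnnS leq_addr.
            + apply: IHd; first by rewrite addSnnS.
              by move=> i h1 h2; apply: hf' => //; apply: ltnW.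
        by apply: (gen (k - j)); rewrite ?subnKC.
  split.
  + exists r; split; first by case/andP: hi.
    split; first by move=> i; case/andP: (hd i).
    by move=> n; have [m hm] := ha None n; exists m.
  + by apply/(key _ (subf_self phi)); case/andP: hi.
- move=> [[r [hi [hd ha]]] hphi].
  have hcl := subf_self phi.
  exists (fun i => (r i, truthT pi i)); split.
    by rewrite /= hi vl_truth //; apply/pbE.
  split.
  + move=> j; rewrite /= hd /=; apply/allP => f hf.
    case: f hf => [|p|g|g h|g|g h] hf /=; rewrite !vl_truth //;
    first [ by rewrite pb_false | by rewrite pb_bool | by rewrite pb_not
          | by rewrite pb_or | by rewrite (pb_iff (until_exp _ _ _ _)) pb_or pb_and
          | exact: sub_neg hf | exact: sub_next hf | exact: sub_orl hf
          | exact: sub_orr hf | exact: sub_untl hf | exact: sub_untr hf | idtac ].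
    all: idtac.
  + case=> [i|] n /=; last by have [m hm] := ha n; exists m.
    rewrite /uacc.
    case e: (nth LBot cl i) => [| | | | |g h]; try by exists n.
    have hu := nth_cl e.
    have hh' := sub_untr hu.
    case: (classic (sat pi n (LUntil g h))) => [[k [hk [hh _]]]|hn].
    * by exists k; split=> //; apply/orP; right; rewrite vl_truth //; apply/pbE.
    * exists n; split=> //; apply/orP; left; rewrite vl_truth //.
      by apply/negP => /pbE.
Qed.

End Trans.

Definition tB (B : buchi) (f : ltl) : buchi := degen (trG B f).
Lemma tB_lang B f pi : lang (tB B f) pi <-> lang B pi /\ models pi f.
Proof. by rewrite /tB degen_lang trG_lang. Qed.

Definition ub : buchi := @Buchi AP unit (fun _ => true) (fun _ _ _ => true) (fun _ => true).
Lemma ub_lang pi : lang ub pi.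
Proof. by exists (fun _ => tt); split=> //; split=> // n; exists n. Qed.

Section Lasso.
Variable C : buchi.
Variable pi : trace.
Variable rho : nat -> bstate C.
Hypothesis hrun : accepting_run AP C pi rho.
Variables i j : nat.
Hypothesis hij : i < j.
Hypothesis hrij : rho i = rho j.
Hypothesis hacc : bacc C (rho i).

Definition nextn (x : nat) := if x.+1 < j then x.+1 else i.
Lemma nextn_lt x : nextn x < j.
Proof. by rewrite /nextn; case: ifP. Qed.
Definition fk k := iter k nextn 0.
Lemma fk_lt k : fk k < j.
Proof. by case: k => [|k] /=; [lia|exact: nextn_lt]. Qed.

Lemma ks_ne : exists s : 'I_j, (fun x : 'I_j => val x == 0) s.
Proof. by exists (Ordinal (fk_lt 0)). Qed.
Lemma ks_tot : forall s : 'I_j, exists t : 'I_j, (fun x y : 'I_j => val y == nextn (val x)) s t.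
Proof. by move=> s; exists (Ordinal (nextn_lt s)). Qed.

Definition KS : kripke :=
  @Kripke AP (ordinal j : finType) (fun x => val x == 0)
    (fun x y => val y == nextn (val x)) (fun x => pi (val x)) ks_ne ks_tot.

Lemma KS_trace pi' : is_trace KS pi' -> forall k, pi' k = pi (fk k).
Proof.
move=> [r [h0 [ht hl]]].
have e : forall k, val (r k) = fk k.
  elim=> [|k IH]; first by apply/eqP.
  by rewrite /fk iterS -/(fk k) -IH; apply/eqP; exact: ht.
by move=> k; rewrite hl /= e.
Qed.

Lemma KS_has : is_trace KS (fun k => pi (fk k)).
Proof.
exists (fun k => Ordinal (fk_lt k)); split=> //; split=> // k; rewrite /ktrans /KS /=.
exact: eqxx.
Qed.

Lemma iter_i d : i + d < j -> iter d nextn i = i + d.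
Proof.
elim: d => [|d IH] h; first by rewrite addn0.
rewrite iterS IH; last by lia.
by rewrite /nextn; case: ifP => //; lia.
Qed.

Lemma iter_cycle : iter (j - i) nextn i = i.
Proof.
have e : j - i = (j - i.+1).+1 by lia.
rewrite e iterS iter_i; last by lia.
by rewrite /nextn; case: ifP => //; lia.
Qed.

Lemma fk_small d : d <= i -> fk d = d.
Proof.
elim: d => [|d IH] h //.
rewrite /fk iterS -/(fk d) IH; last by lia.
by rewrite /nextn; case: ifP => //; lia.
Qed.

Lemma fk_per t : fk (t * (j - i) + i) = i.
Proof.
elim: t => [|t IH]; first by rewrite mul0n add0n fk_small.
by rewrite mulSn -addnA /fk iterD -/(fk _) IH iter_cycle.
Qed.

Lemma KS_lang : lang C (fun k => pi (fk k)).
Proof.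
case: hrun => [h0 [hd ha]].
exists (fun k => rho (fk k)); split=> //; split.
- move=> k; rewrite /fk iterS -/(fk k) /nextn.
  case: ifP => h; first exact: hd.
  have e : (fk k).+1 = j by have := fk_lt k; lia.
  by rewrite hrij -e; exact: hd.
- move=> n; exists (n * (j - i) + i); split; last by rewrite fk_per.
  by apply: leq_trans (leq_addr _ _); apply: leq_pmulr; lia.
Qed.
End Lasso.

Lemma upk (C : buchi) : (exists pi, lang C pi) ->
  exists M : kripke, (exists pi, is_trace M pi) /\ forall pi, is_trace M pi -> lang C pi.
Proof.
move=> [pi [rho hrun]].
have hrun' := hrun; case: hrun' => [h0 [hd ha]].
pose nxt n := proj1_sig (constructive_indefinite_description _ (ha n)).
have hnxt n : n <= nxt n /\ bacc C (rho (nxt n)).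
  by rewrite /nxt; case: constructive_indefinite_description.
pose a := fix a k := if k is k'.+1 then nxt (a k').+1 else nxt 0.
have ainc : forall k d, a k < a (k + d.+1).
  move=> k; elim=> [|d IH]; first by rewrite addn1 /=; have [] := hnxt (a k).+1.
  rewrite addnS /=; apply: leq_trans IH _; have [h _] := hnxt (a (k + d.+1)).+1.
  exact: ltnW.
have aacc : forall k, bacc C (rho (a k)).
  by case=> [|k] /=; [have [] := hnxt 0|have [] := hnxt (a k).+1].
pose h := fun x : 'I_(#|bstate C|).+1 => rho (a x).
have ninj : ~ injective h.
  by move=> /leq_card; rewrite card_ord ltnn.
have [x [y [hxy nxy]]] : exists x y, h x = h y /\ x <> y.
  apply: NNPP => hn; apply: ninj => x y e; apply: NNPP => ne; apply: hn.
  by exists x, y.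
wlog lxy : x y hxy nxy / x < y.
  move=> W; case: (ltngtP x y) => l; first exact: (W x y).
  - by apply: (W y x) => // e; apply: nxy.
  - by exfalso; apply: nxy; apply: val_inj.
have lt : a x < a y.
  have e : (y : nat) = x + (y - x.+1).+1 by lia.
  by rewrite e; apply: ainc.
exists (KS pi lt (aacc x)); split.
- by eexists; apply: KS_has.
- move=> pi' /KS_trace tr.
  have -> : pi' = (fun k => pi (fk (a x) (a y) k)).
    exact: functional_extensionality.
  exact: (KS_lang hrun lt hxy (aacc x)).
Qed.

Definition uni (A B : buchi) : buchi :=
  @Buchi AP (bstate A + bstate B)%type
   (fun s => match s with inl a => binit A a | inr b => binit B b end)
   (fun s l s' => match s, s' with
                  | inl a, inl a' => bdelta A a l a'
                  | inr b, inr b' => bdelta B b l b'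
                  | _, _ => false end)
   (fun s => match s with inl a => bacc A a | inr b => bacc B b end).

Lemma uni_lang A B pi : lang (uni A B) pi <-> lang A pi \/ lang B pi.
Proof.
split.
- move=> [r [h0 [hd ha]]].
  case e0: (r 0) => [a0|b0].
  + left.
    have hl : forall i, exists a, r i = inl a.
      elim=> [|i [a IH]]; first by exists a0.
      move: (hd i); rewrite IH; case: (r i.+1) => // a' _; by exists a'.
    pose ra i := match r i with inl a => a | inr _ => a0 end.
    have er : forall i, r i = inl (ra i) by move=> i; rewrite /ra; case: (hl i) => a ->.
    exists ra; split; first by move: h0; rewrite er.
    split; first by move=> i; move: (hd i); rewrite !er.
    by move=> n; have [m [hm]] := ha n; rewrite er => hb; exists m.
  + right.
    have hl : forall i, exists b, r i = inr b.
      elim=> [|i [b IH]]; first by exists b0.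
      move: (hd i); rewrite IH; case: (r i.+1) => // b' _; by exists b'.
    pose rb i := match r i with inr b => b | inl _ => b0 end.
    have er : forall i, r i = inr (rb i) by move=> i; rewrite /rb; case: (hl i) => b ->.
    exists rb; split; first by move: h0; rewrite er.
    split; first by move=> i; move: (hd i); rewrite !er.
    by move=> n; have [m [hm]] := ha n; rewrite er => hb; exists m.
- case=> [[r [h0 [hd ha]]]|[r [h0 [hd ha]]]].
  + by exists (fun i => inl (r i)).
  + by exists (fun i => inr (r i)).
Qed.

Lemma supp_uni A B x : supp (uni A B) x <-> supp A x /\ supp B x.
Proof.
split.
- by move=> h; split=> pi hp; apply: h; apply/uni_lang; [left|right].
- by move=> [h1 h2] pi /uni_lang [] hp; [apply: h1|apply: h2].
Qed.

Lemma Cn_sub (X : theory) f : X f -> Cn X f.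
Proof. by move=> hx M hM pi tr; apply: hM. Qed.

Lemma taut_Cn (X : theory) f : tautology f -> Cn X f.
Proof. by move=> ht M _ pi _; apply: ht. Qed.

Lemma supp_Cn A f : Cn (supp A) f -> supp A f.
Proof.
move=> hc pi hp; apply: NNPP => hn.
have [M [[pi0 tr0] hM]] := @upk (tB A (LNeg f)) (ex_intro _ pi (proj2 (tB_lang A (LNeg f) pi) (conj hp hn))).
have := hM _ tr0; rewrite tB_lang => [[_ hn0]]; apply: hn0.
by apply: (hc M) tr0 => pi' /hM /tB_lang [hA _] x; apply.
Qed.

Lemma Cn0_taut f : Cn (fun _ => False) f -> tautology f.
Proof.
move=> hc pi; apply: NNPP => hn.
have [M [[pi0 tr0] hM]] := @upk (tB ub (LNeg f)) (ex_intro _ pi (proj2 (tB_lang ub (LNeg f) pi) (conj (ub_lang pi) hn))).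
have := hM _ tr0; rewrite tB_lang => [[_ hn0]]; apply: hn0.
by apply: (hc M) tr0.
Qed.

Lemma sem_equiv f g : lequiv f g -> forall pi, models pi f -> models pi g.
Proof.
move=> e pi hf; apply: NNPP => hn.
have hl : lang (tB (tB ub f) (LNeg g)) pi by apply/tB_lang; split=> //; apply/tB_lang; split=> //; apply: ub_lang.
have [M [[pi0 tr0] hM]] := upk (ex_intro _ pi hl).
have := hM _ tr0; rewrite !tB_lang => [[[_ hf0] hn0]]; apply: hn0.
have hg : Cn (fun x => x = f) g by rewrite /lequiv in e; rewrite e; apply: Cn_sub.
apply: (hg M) tr0 => pi' /hM; rewrite !tB_lang => [[[_ hf'] _]] x ->; exact: hf'.
Qed.

Lemma lequiv_sym f g : lequiv f g -> lequiv g f.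
Proof. exact: esym. Qed.

Lemma sem_equiv_iff f g : lequiv f g -> forall pi, models pi f <-> models pi g.
Proof. by move=> e pi; split; apply: sem_equiv => //; apply: lequiv_sym. Qed.


Lemma lequiv_Cn0 f g : lequiv f g -> Cn (fun _ => False) f -> Cn (fun _ => False) g.
Proof.
move=> e /Cn0_taut ht; apply: taut_Cn => pi; exact: sem_equiv e pi (ht pi).
Qed.

Lemma lequiv_supp A f g : lequiv f g -> supp A f -> supp A g.
Proof. by move=> e h pi hp; apply: sem_equiv e _ (h pi hp). Qed.

Lemma dir1 (A0 : buchi) (g : ltl -> buchi) : buchi_choice g ->
  rational (supp A0) (induced (supp A0) g) /\ remains_in_EBuchi (induced (supp A0) g).
Proof.
move=> [BF1 [BF2 BF3]].
set K := supp A0.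
have ntaut : forall f, ~ Cn (fun _ => False) f -> ~ tautology f.
  by move=> f hn ht; apply: hn; apply: taut_Cn.
have hE : forall f, exists D, induced K g f = supp D.
  move=> f; case: (classic (~ Cn (fun _ => False) f /\ K f)) => hc.
  - exists (uni A0 (g f)); apply: thext => x; rewrite supp_uni.
    by split=> [[hk h]|[hk h]]; split=> //; apply: h.
  - exists A0; apply: thext => x; split=> [[]//|hk]; split=> // h; by case: hc.
split; last by move=> f; exact: hE.
split.
  by move=> f; have [D ->] := hE f; apply: thext => x; split; [apply: Cn_sub|apply: supp_Cn].
split; first by move=> f x [].
split.
  move=> f hk; apply: thext => x; split=> [[]//|h]; split=> // [[_ hk']]; by case: hk.
split.
  move=> f hn [hk h]; have hs := h (conj hn hk).
  have [pi hp] := BF1 f; apply: (BF2 f (ntaut _ hn) pi hp); exact: hs pi hp.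
split.
  move=> f x hx; case: (classic (~ Cn (fun _ => False) f /\ K f)) => hc.
  - move=> M hM pi tr.
    have hf := hM pi tr f (or_intror erefl).
    have hin : induced K g f (LOr x (LNeg f)).
      split; first by move=> pi' hp; left; apply: hx.
      move=> _ pi' hp; right; exact: (BF2 f (ntaut _ (proj1 hc)) pi' hp).
    by case: (hM pi tr _ (or_introl hin)) => // hnf; case: (hnf hf).
  - apply: Cn_sub; left; split=> // h; by case: hc.
move=> f f' e; apply: thext => x.
have hc : (~ Cn (fun _ => False) f /\ K f) <-> (~ Cn (fun _ => False) f' /\ K f').
  have e' := lequiv_sym e.
  split=> [[h1 h2]|[h1 h2]]; split.
  - by move=> h; apply: h1; apply: lequiv_Cn0 e' h.
  - exact: lequiv_supp e h2.
  - by move=> h; apply: h1; apply: lequiv_Cn0 e h.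
  - exact: lequiv_supp e' h2.
have hs : supp (g f) x <-> supp (g f') x by rewrite /supp (BF3 _ _ e).
rewrite /induced; tauto.
Qed.


Lemma pb_T (P : Prop) : P -> pb P = true.
Proof. by move=> h; apply/pbE. Qed.
Lemma pb_F (P : Prop) : ~ P -> pb P = false.
Proof. by move=> h; apply/negP => /pbE. Qed.

Lemma dir2 (A0 : buchi) (c : contraction) :
  rational (supp A0) c -> remains_in_EBuchi c ->
  exists g, buchi_choice g /\ c = induced (supp A0) g.
Proof.
move=> [K1 [K2 [K3 [K4 [K5 K6]]]]] hrem.
set K := supp A0.
pose Bf f := proj1_sig (constructive_indefinite_description _ (hrem f)).
have hBf : forall f, c f = supp (Bf f).
  by move=> f; rewrite /Bf; case: constructive_indefinite_description.
pose cond f := ~ Cn (fun _ => False) f /\ K f.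
pose G f := if pb (cond f) then tB (Bf f) (LNeg f)
            else if pb (tautology f) then ub else tB ub (LNeg f).
pose rep f := epsilon (inhabits f) (lequiv f).
have hrep : forall f, lequiv f (rep f).
  by move=> f; rewrite /rep; apply: epsilon_spec; exists f.
have hrepe : forall f f', lequiv f f' -> rep f = rep f'.
  move=> f f' e; rewrite /rep.
  have -> : inhabits f = inhabits f' by apply: proof_irrelevance.
  have -> : lequiv f = lequiv f'; last by [].
  apply: functional_extensionality => y; apply: propositional_extensionality.
  by split=> e'; [exact: etrans (esym e) e'|exact: etrans e e'].
have hcond : forall f f', lequiv f f' -> cond f -> cond f'.
  move=> f f' e [h1 h2]; split; last exact: lequiv_supp e h2.
  by move=> h; apply: h1; apply: lequiv_Cn0 (lequiv_sym e) h.
exists (fun f => G (rep f)); split.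
  split.
    move=> f; rewrite /G; set r := rep f.
    case: (classic (cond r)) => hc.
    - rewrite pb_T //.
      have := K4 r (proj1 hc); rewrite hBf => hn.
      have [pi [hp hm]] : exists pi, lang (Bf r) pi /\ ~ models pi r.
        apply: NNPP => H; apply: hn => pi hp; apply: NNPP => hm; apply: H; by exists pi.
      by exists pi; apply/tB_lang.
    - rewrite pb_F //.
      case: (classic (tautology r)) => ht.
      + by rewrite pb_T //; exists (fun _ => set0); apply: ub_lang.
      + rewrite pb_F //.
        have [pi hm] : exists pi, ~ models pi r.
          by apply: NNPP => H; apply: ht => pi; apply: NNPP => hm; apply: H; exists pi.
        by exists pi; apply/tB_lang; split=> //; apply: ub_lang.
  split.
    move=> f hnt pi; rewrite /G; set r := rep f; have e := hrep f.
    case: (classic (cond r)) => hc.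
    - rewrite pb_T // => /tB_lang [_ hn] hf; apply: hn; exact: sem_equiv e _ hf.
    - rewrite pb_F //.
      case: (classic (tautology r)) => ht.
      + by exfalso; apply: hnt => pi'; apply: sem_equiv (lequiv_sym e) _ (ht pi').
      + rewrite pb_F // => /tB_lang [_ hn] hf; apply: hn; exact: sem_equiv e _ hf.
  by move=> f f' e; rewrite (hrepe _ _ e).
apply: functional_extensionality => f; apply: thext => x.
case: (classic (cond f)) => hc.
- set r := rep f; have e := hrep f.
  have hcr : cond r := hcond _ _ e hc.
  rewrite /induced /G pb_T // (K6 f r e) hBf.
  split.
  + move=> hs; split; first by apply: (K2 r); rewrite hBf.
    by move=> _ pi /tB_lang [hp _]; exact: hs pi hp.
  + move=> [hk hs]; have hs' := hs hc.
    move=> pi hp; apply: NNPP => hnx.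
    case: (classic (models pi r)) => hr; last by apply: hnx; apply: hs'; apply/tB_lang.
    have hl : lang (tB (tB (Bf r) r) (LNeg x)) pi.
      by apply/tB_lang; split=> //; apply/tB_lang.
    have [M [[pi0 tr0] hM]] := upk (ex_intro _ pi hl).
    have := hM _ tr0; rewrite !tB_lang => [[[_ _] hn0]]; apply: hn0.
    apply: (K5 r x hk M) tr0 => pi' /hM; rewrite !tB_lang => [[[hp' hr'] _]] y [hy|->] //.
    by move: hy; rewrite hBf => hy; exact: hy pi' hp'.
- have hcx : c f x <-> K x.
    case: (classic (K f)) => hkf; last by rewrite K3.
    have h0 : Cn (fun _ => False) f by apply: NNPP => hn; apply: hc; split.
    split; first exact: K2.
    move=> hk; rewrite K1.
    move=> M hM pi tr; apply: (K5 f x hk M) tr => pi' tr' y [hy|->].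
    + exact: hM pi' tr' y hy.
    + exact: h0 M (fun _ _ _ (hF : False) => match hF with end) pi' tr'.
  rewrite /induced; split.
  + by move=> /hcx hk; split=> // /hc.
  + by move=> [/hcx].
Qed.

End Aux.

Theorem mainTheorem16 (AP : finType) (AP_nonempty : 0 < #|AP|)
  (K : theory AP) (hK : E_Buchi AP K) (c : contraction AP) :
  (rational AP K c /\ remains_in_EBuchi AP c) <->
  (exists g : ltl AP -> buchi AP, buchi_choice AP g /\ c = induced AP K g).
Proof.
case: hK => A0 eK; subst K; split.
- by move=> [hr hrem]; apply: dir2.
- by move=> [g [hg ->]]; apply: dir1.
Qed.
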